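(* Assume the Continuum Hypothesis. Let $M=\langle A, \Sigma \cup \{R\}\rangle$ be a countable structure with signature $\Sigma \cup \{R\}$, where $R$ is an $n$-ary relation symbol. Let $\mathcal{F}$ be the set of all (everywhere defined) functions $f\colon \mathbb{N}\to A$. The following conditions are equivalent: (1) the relation $R$ is definable in $\langle A, \Sigma\rangle$; (2) every permutation $\varphi$ of $\mathcal{F}$ which almost preserves all relations from $\Sigma$ also almost preserves the relation $R$.
   Context: The signature $\Sigma$ is assumed to contain the equality symbol $=$. A relation $R$ is definable in $\langle A,\Sigma\rangle$ if there is a first-order formula $S(x_1,\dots,x_n)$ in the signature $\Sigma$ such that $M\vDash \forall x_1\dots\forall x_n\,(R(x_1,\dots,x_n)\leftrightarrow S(x_1,\dots,x_n))$. For an $n$-ary relation $P$ on $A$ and a (possibly partial) mapping $\varphi\colon\mathcal{F}\to\mathcal{F}$, we say $\varphi$ almost preserves $P$ if for all $f_1,\dots,f_n\in \mathrm{Dom}(\varphi)$ the set $\{i\in\mathbb{N} : P(f_1(i),\dots,f_n(i)) \not\leftrightarrow P(\varphi(f_1)(i),\dots,\varphi(f_n)(i))\}$ is finite. A permutation of $\mathcal{F}$ is a bijection $\mathcal{F}\to\mathcal{F}$. *)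

(* Defs.v *)
From mathcomp Require Import all_boot.
Set Implicit Arguments. Unset Strict Implicit. Unset Printing Implicit Defensive.

(* The Continuum Hypothesis: every set of reals (coded as nat -> bool) is
   either countable or contains an injective copy of the continuum. *)
Definition CH : Prop :=
  forall S : (nat -> bool) -> Prop,
    (exists g : nat -> (nat -> bool), forall x, S x -> exists k, g k = x) \/
    (exists h : (nat -> bool) -> (nat -> bool),
        (forall x, S (h x)) /\ injective h).

Definition countable_type (T : Type) : Prop :=
  exists f : T -> nat, injective f.

Inductive formula (Sym : Type) (ar : Sym -> nat) : Type :=
  | FEq : nat -> nat -> formula ar
  | FRel : forall s : Sym, ('I_(ar s) -> nat) -> formula ar
  | FNot : formula ar -> formula ar
  | FAnd : formula ar -> formula ar -> formula ar
  | FOr : formula ar -> formula ar -> formula ar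
  | FImp : formula ar -> formula ar -> formula ar
  | FExists : nat -> formula ar -> formula ar
  | FForall : nat -> formula ar -> formula ar.

Definition upd (A : Type) (e : nat -> A) (x : nat) (a : A) : nat -> A :=
  fun y => if y == x then a else e y.

Fixpoint sat (Sym : Type) (ar : Sym -> nat) (A : Type)
    (I : forall s : Sym, ('I_(ar s) -> A) -> Prop)
    (e : nat -> A) (phi : formula ar) {struct phi} : Prop :=
  match phi with
  | FEq x y => e x = e y
  | FRel s args => I s (fun k => e (args k))
  | FNot p => ~ sat I e p
  | FAnd p q => sat I e p /\ sat I e q
  | FOr p q => sat I e p \/ sat I e q
  | FImp p q => sat I e p -> sat I e q
  | FExists x p => exists a : A, sat I (upd e x a) p
  | FForall x p => forall a : A, sat I (upd e x a) p
  end.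

(* R (n-ary) is definable in <A, I>: there is a formula S(x_0,...,x_{n-1})
   (variables 0..n-1 play the role of x_1..x_n) equivalent to R. *)
Definition definable (Sym : Type) (ar : Sym -> nat) (A : Type)
    (I : forall s : Sym, ('I_(ar s) -> A) -> Prop)
    (n : nat) (R : ('I_n -> A) -> Prop) : Prop :=
  exists S : formula ar,
    forall e : nat -> A, R (fun k => e (nat_of_ord k)) <-> sat I e S.

Definition almost_preserves (A : Type) (phi : (nat -> A) -> (nat -> A))
    (n : nat) (P : ('I_n -> A) -> Prop) : Prop :=
  forall f : 'I_n -> (nat -> A),
    exists N : nat, forall i : nat, N <= i ->
      (P (fun k => f k i) <-> P (fun k => phi (f k) i)).

Definition eq_rel (A : Type) : ('I_2 -> A) -> Prop :=
  fun t => t ord0 = t ord_max.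

(* Main.v *)
Require Import Defs.
From mathcomp Require Import all_boot.
From mathcomp Require Import boolp wochoice.
From Stdlib Require Import Inverse_Image.

Set Implicit Arguments. Unset Strict Implicit. Unset Printing Implicit Defensive.

Section Basics.
Variables (Sym : Type) (ar : Sym -> nat) (A : Type).
Variable (I : forall s : Sym, ('I_(ar s) -> A) -> Prop).

Fixpoint bnd (p : formula ar) : nat :=
  match p with
  | FEq x y => (maxn x y).+1
  | FRel s args => \max_(k < ar s) (args k).+1
  | FNot p => bnd p
  | FAnd p q => maxn (bnd p) (bnd q)
  | FOr p q => maxn (bnd p) (bnd q)
  | FImp p q => maxn (bnd p) (bnd q)
  | FExists x p => maxn x.+1 (bnd p)
  | FForall x p => maxn x.+1 (bnd p)
  end.

Lemma sat_agree (p : formula ar) : forall e e' : nat -> A,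
  (forall v, v < bnd p -> e v = e' v) -> (sat I e p <-> sat I e' p).
Proof.
elim: p => /=.
- move=> x y e e' H; rewrite !H //; rewrite ltnS ?leq_maxl ?leq_maxr //.
- move=> s args e e' H.
  have -> : (fun k => e (args k)) = (fun k => e' (args k)); last by [].
  apply: funext => k; apply: H.
  by apply: (leq_trans _ (leq_bigmax k)).
- move=> p IH e e' H; by rewrite (IH e e' H).
- move=> p IHp q IHq e e' H.
  rewrite (IHp e e') ?(IHq e e') // => v hv; apply: H;
    by apply: (leq_trans hv); rewrite ?leq_maxl ?leq_maxr.
- move=> p IHp q IHq e e' H.
  rewrite (IHp e e') ?(IHq e e') // => v hv; apply: H;
    by apply: (leq_trans hv); rewrite ?leq_maxl ?leq_maxr.
- move=> p IHp q IHq e e' H.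
  rewrite (IHp e e') ?(IHq e e') // => v hv; apply: H;
    by apply: (leq_trans hv); rewrite ?leq_maxl ?leq_maxr.
- move=> x p IH e e' H; split=> -[a Ha]; exists a.
  + apply/(IH (upd e x a)) => // v hv; rewrite /upd; case: eqP => // _.
    by apply: H; apply: (leq_trans hv); rewrite leq_maxr.
  + apply/(IH _ (upd e' x a)) => // v hv; rewrite /upd; case: eqP => // _.
    by apply: H; apply: (leq_trans hv); rewrite leq_maxr.
- move=> x p IH e e' H; split=> Ha a.
  + apply/(IH (upd e x a)) => // v hv; rewrite /upd; case: eqP => // _.
    by apply: H; apply: (leq_trans hv); rewrite leq_maxr.
  + apply/(IH _ (upd e' x a)) => // v hv; rewrite /upd; case: eqP => // _.
    by apply: H; apply: (leq_trans hv); rewrite leq_maxr.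
Qed.

Lemma sat_agreeI (p : formula ar) (e e' : nat -> A) :
  (forall v, v < bnd p -> e v = e' v) -> sat I e p -> sat I e' p.
Proof. by move=> H; case: (sat_agree H). Qed.

Lemma rename (p : formula ar) : forall rho : nat -> nat,
  exists p' : formula ar, forall e : nat -> A, sat I e p' <-> sat I (e \o rho) p.
Proof.
elim: p.
- move=> x y rho; exists (FEq ar (rho x) (rho y)) => e //.
- move=> s args rho; exists (FRel (rho \o args)) => e //.
- move=> p IH rho; have [p' Hp] := IH rho; exists (FNot p') => e /=; by rewrite Hp.
- move=> p IHp q IHq rho; have [p' Hp] := IHp rho; have [q' Hq] := IHq rho.
  by exists (FAnd p' q') => e /=; rewrite Hp Hq.
- move=> p IHp q IHq rho; have [p' Hp] := IHp rho; have [q' Hq] := IHq rho.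
  by exists (FOr p' q') => e /=; rewrite Hp Hq.
- move=> p IHp q IHq rho; have [p' Hp] := IHp rho; have [q' Hq] := IHq rho.
  by exists (FImp p' q') => e /=; rewrite Hp Hq.
- move=> x p IH rho.
  pose y := (\max_(v < bnd p) rho v).+1.
  have fresh : forall v, v < bnd p -> rho v < y.
    by move=> v hv; rewrite ltnS (leq_bigmax (Ordinal hv)).
  have [p' Hp] := IH (fun v => if v == x then y else rho v).
  exists (FExists y p') => e /=; split=> -[a Ha]; exists a.
  + move: Ha; rewrite Hp; apply: sat_agreeI => v hv /=.
    rewrite /upd; case: (eqVneq v x) => [_|nvx]; first by rewrite !eqxx.
    case: eqP => // E; have := fresh v hv; by rewrite E ltnn.
  + rewrite Hp; move: Ha; apply: sat_agreeI => v hv /=.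
    rewrite /upd; case: (eqVneq v x) => [_|nvx]; first by rewrite !eqxx.
    case: eqP => // E; have := fresh v hv; by rewrite E ltnn.
- move=> x p IH rho.
  pose y := (\max_(v < bnd p) rho v).+1.
  have fresh : forall v, v < bnd p -> rho v < y.
    by move=> v hv; rewrite ltnS (leq_bigmax (Ordinal hv)).
  have [p' Hp] := IH (fun v => if v == x then y else rho v).
  exists (FForall y p') => e /=; split=> Ha a.
  + move: (Ha a); rewrite Hp; apply: sat_agreeI => v hv /=.
    rewrite /upd; case: (eqVneq v x) => [_|nvx]; first by rewrite !eqxx.
    case: eqP => // E; have := fresh v hv; by rewrite E ltnn.
  + rewrite Hp; move: (Ha a); apply: sat_agreeI => v hv /=.
    rewrite /upd; case: (eqVneq v x) => [_|nvx]; first by rewrite !eqxx.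
    case: eqP => // E; have := fresh v hv; by rewrite E ltnn.
Qed.

End Basics.

Set Implicit Arguments. Unset Strict Implicit. Unset Printing Implicit Defensive.

Definition eps (T : Type) (d : T) (P : T -> Prop) : T :=
  match pselect (exists x, P x) with
  | left H => proj1_sig (cid H)
  | right _ => d
  end.

Lemma epsP (T : Type) (d : T) (P : T -> Prop) : (exists x, P x) -> P (eps d P).
Proof. by rewrite /eps; case: pselect => // H _; case: (cid H). Qed.

Section EnumF.
Variables (Sym : Type) (ar : Sym -> nat).
Variable (c : Sym -> nat).
Hypothesis hc : injective c.

Fixpoint fcode (p : formula ar) : GenTree.tree nat :=
  match p with
  | FEq x y => GenTree.Node 0 [:: GenTree.Leaf x; GenTree.Leaf y]
  | FRel s args => GenTree.Node 1 [:: GenTree.Leaf (c s);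
        GenTree.Node 0 [seq GenTree.Leaf (args k) | k <- enum 'I_(ar s)]]
  | FNot p => GenTree.Node 2 [:: fcode p]
  | FAnd p q => GenTree.Node 3 [:: fcode p; fcode q]
  | FOr p q => GenTree.Node 4 [:: fcode p; fcode q]
  | FImp p q => GenTree.Node 5 [:: fcode p; fcode q]
  | FExists x p => GenTree.Node 6 [:: GenTree.Leaf x; fcode p]
  | FForall x p => GenTree.Node 7 [:: GenTree.Leaf x; fcode p]
  end.

Lemma fcode_inj : injective fcode.
Proof.
elim=> [x y|s args|p IH|p IHp q IHq|p IHp q IHq|p IHp q IHq|x p IH|x p IH];
  case=> [x' y'|s' args'|p'|p' q'|p' q'|p' q'|x' p'|x' p'] //=.
- by case=> -> ->.
- case=> /hc E; subst s'.
  move=> /eq_in_map H.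
  have -> : args = args'.
    by apply: funext => k; have := H k; rewrite mem_enum => /(_ isT) [].
  by [].
- by case=> /IH ->.
- by case=> /IHp -> /IHq ->.
- by case=> /IHp -> /IHq ->.
- by case=> /IHp -> /IHq ->.
- by case=> -> /IH ->.
- by case=> -> /IH ->.
Qed.

Definition fenum (k : nat) : formula ar :=
  eps (FEq ar 0 0) (fun p => pickle (fcode p) = k).

Lemma fenum_surj (p : formula ar) : exists k, fenum k = p.
Proof.
exists (pickle (fcode p)); rewrite /fenum.
have := epsP (FEq ar 0 0) (ex_intro (fun q => pickle (fcode q) = pickle (fcode p)) p erefl).
by move/(pcan_inj (@pickleK _))/fcode_inj.
Qed.

End EnumF.

Set Implicit Arguments. Unset Strict Implicit. Unset Printing Implicit Defensive.

Lemma uniformN (G : (nat -> bool) -> nat -> Prop) (k : nat) :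
  (forall s s', (forall j, j < k -> s j = s' j) -> G s = G s') ->
  (forall s, exists N, forall i, N <= i -> G s i) ->
  exists N, forall s i, N <= i -> G s i.
Proof.
elim: k G => [|k IH] G Gext Hs.
  have [N HN] := Hs (fun _ => false); exists N => s i hi.
  by rewrite (Gext s (fun _ => false)) //; apply: HN.
pose sk (b : bool) (s : nat -> bool) := fun j => if j == k then b else s j.
have HG b : exists N, forall s i, N <= i -> G (sk b s) i.
  apply: (IH (fun s => G (sk b s))).
    move=> s s' H; apply: Gext => j hj; rewrite /sk; case: eqP => // njk.
    by apply: H; rewrite ltn_neqAle; move: hj; rewrite ltnS => ->; rewrite andbT; apply/eqP.
  move=> s; exact: Hs.
have [N1 H1] := HG true; have [N0 H0] := HG false.
exists (maxn N1 N0) => s i hi.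
have -> : s = sk (s k) s by apply: funext => j; rewrite /sk; case: eqP => // ->.
case: (s k).
  by apply: H1; apply: leq_trans hi; rewrite leq_maxl.
by apply: H0; apply: leq_trans hi; rewrite leq_maxr.
Qed.

Lemma maxgood (P : nat -> Prop) (i : nat) :
  (forall m, m <= i -> ~ P m) \/
  (exists mx, [/\ mx <= i, P mx & forall m, m <= i -> P m -> m <= mx]).
Proof.
elim: i => [|i [IH|[mx [h1 h2 h3]]]].
- case: (lem (P 0)) => H.
  + right; exists 0; split=> // m; by rewrite leqn0 => /eqP ->.
  + by left=> m; rewrite leqn0 => /eqP ->.
- case: (lem (P i.+1)) => H.
    right; exists i.+1; split=> // m hm _ //.
  left => m; rewrite leq_eqVlt ltnS => /orP[/eqP ->|] //; exact: IH.
- case: (lem (P i.+1)) => H.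
    right; exists i.+1; split=> // m hm _ //.
  right; exists mx; split=> //; first by apply: leq_trans h1 _.
  move=> m; rewrite leq_eqVlt ltnS => /orP[/eqP ->|] //; exact: h3.
Qed.

Section TPsec.
Variables (Sym : Type) (ar : Sym -> nat) (A : Type).
Variable (I : forall s : Sym, ('I_(ar s) -> A) -> Prop).
Variable (en : nat -> formula ar).
Hypothesis en_surj : forall p, exists k, en k = p.

Local Notation F := (nat -> A).

Definition ev (E : nat -> F) (i : nat) : nat -> A := fun v => E v i.

Definition aeq (P Q : nat -> Prop) := exists N, forall i, N <= i -> (P i <-> Q i).

Definition TP (Q : F -> F -> Prop) :=
  forall p (E E' : nat -> F), (forall v, Q (E v) (E' v)) ->
    aeq (fun i => sat I (ev E i) p) (fun i => sat I (ev E' i) p).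

Lemma TP_sym (Q : F -> F -> Prop) : TP Q -> TP (fun a b => Q b a).
Proof.
move=> H p E E' HE; have [N HN] := H p E' E HE; exists N => i hi.
by rewrite HN.
Qed.

Lemma TP_sub (Q Q' : F -> F -> Prop) :
  (forall a b, Q a b -> Q' a b) -> TP Q' -> TP Q.
Proof. by move=> sQ H p E E' HE; apply: H => v; apply: sQ. Qed.

Lemma TP_fin (Q : F -> F -> Prop) :
  (forall (E E' : nat -> F) (b : nat), (forall v, Q (E v) (E' v)) ->
     exists Q', [/\ TP Q', (forall v, v < b -> Q' (E v) (E' v)) &
                    exists a a', Q' a a']) ->
  TP Q.
Proof.
move=> H p E E' HE.
have [Q' [TQ' HQ' [a [a' Qa]]]] := H E E' (bnd p) HE.
pose E1 v := if v < bnd p then E v else a.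
pose E1' v := if v < bnd p then E' v else a'.
have [N HN] := TQ' p E1 E1' (fun v => ltac:(rewrite /E1 /E1'; case: ifP => hv; [exact: HQ'|exact: Qa])).
exists N => i hi.
have e1 : sat I (ev E i) p <-> sat I (ev E1 i) p.
  by apply: sat_agree => v hv; rewrite /ev /E1 hv.
have e2 : sat I (ev E' i) p <-> sat I (ev E1' i) p.
  by apply: sat_agree => v hv; rewrite /ev /E1' hv.
by rewrite e1 e2; apply: HN.
Qed.

Definition Lit (s : nat -> bool) (j : nat) : formula ar :=
  if s j then en j else FNot (en j).

Fixpoint Conj (s : nat -> bool) (m : nat) : formula ar :=
  match m with
  | 0 => Lit s 0
  | m'.+1 => FAnd (Conj s m') (Lit s m'.+1)
  end.

Lemma Conj_sat (s : nat -> bool) (m : nat) (e : nat -> A) :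
  sat I e (Conj s m) <-> (forall j, j <= m -> (sat I e (en j) <-> s j)).
Proof.
elim: m => [|m IH] /=.
  rewrite /Lit; split.
    move=> H j; rewrite leqn0 => /eqP ->; move: H; case: (s 0) => //= H; by split.
  move=> /(_ 0 (leqnn 0)); case: (s 0) => /= H; [by apply/H | by move/H].
rewrite IH /Lit; split.
  move=> [H1 H2] j; rewrite leq_eqVlt ltnS => /orP[/eqP ->|hj]; last exact: H1.
  by move: H2; case: (s m.+1) => /= H; split.
move=> H; split=> [j hj|]; first by apply: H; apply: leq_trans hj _.
move: (H m.+1 (leqnn _)); case: (s m.+1) => /= H'; [by apply/H' | by move/H'].
Qed.

Lemma Conj_ext (s s' : nat -> bool) (m : nat) :
  (forall j, j < m.+1 -> s j = s' j) -> Conj s m = Conj s' m.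
Proof.
elim: m => [|m IH] H /=; first by rewrite /Lit H.
by rewrite IH ?/Lit ?H // => j hj; apply: H; apply: ltnW.
Qed.

Lemma TP_extend (Q : F -> F -> Prop) (q : nat -> F * F) :
  (forall k, Q (q k).1 (q k).2) -> (forall a b, Q a b -> exists k, q k = (a, b)) ->
  TP Q -> forall h : F, exists h' : F, TP (fun a b => Q a b \/ (a = h /\ b = h')).
Proof.
move=> Qq qQ TQ h.
pose Lenv (x : A) i : nat -> A := fun v => if v == 0 then x else (q v.-1).1 i.
pose Renv (x : A) i : nat -> A := fun v => if v == 0 then x else (q v.-1).2 i.
pose EL : nat -> F := fun v => (q v.-1).1.
pose ER : nat -> F := fun v => (q v.-1).2.
have ELR : forall v, Q (EL v) (ER v) by move=> v; exact: Qq.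
have updL x i : upd (ev EL i) 0 x = Lenv x i.
  by apply: funext => v; rewrite /upd /Lenv /ev /EL; case: eqP => //.
have updR x i : upd (ev ER i) 0 x = Renv x i.
  by apply: funext => v; rewrite /upd /Renv /ev /ER; case: eqP => //.
pose t i : nat -> bool := fun j => `[< sat I (Lenv (h i) i) (en j) >].
pose Good i m := exists x, sat I (Renv x i) (Conj (t i) m).
have HN : forall m, exists N, forall i, N <= i -> Good i m.
  move=> m.
  have [s s' H|s|N HN] := @uniformN
     (fun s i => (exists x, sat I (Lenv x i) (Conj s m)) ->
                      exists x, sat I (Renv x i) (Conj s m)) m.+1.
  - by rewrite (Conj_ext H).
  - have [N HN] := TQ (FExists 0 (Conj s m)) EL ER ELR.
    exists N => i /HN /= H [x Hx]; have [|y Hy] := (proj1 H); first by exists x; rewrite updL.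
    by exists y; rewrite -updR.
  exists N => i hi; apply: (HN (t i) i hi); exists (h i).
  apply/Conj_sat => j _; rewrite /t; by case: asboolP.
pose P i (x : A) := forall m, m <= i -> Good i m -> sat I (Renv x i) (Conj (t i) m).
have Pex i : exists x, P i x.
  case: (maxgood (Good i) i) => [H|[mx [h1 [x Hx] h3]]].
    by exists (h i) => m hm /(H m hm).
  exists x => m hm Gm; have := h3 m hm Gm => hmx.
  move/Conj_sat: Hx => Hx; apply/Conj_sat => j hj; apply: Hx.
  exact: leq_trans hj hmx.
pose h' : F := fun i => eps (h i) (P i).
have h'P i : P i (h' i) by apply: epsP.
have cond : forall j, aeq (fun i => sat I (Lenv (h i) i) (en j))
                          (fun i => sat I (Renv (h' i) i) (en j)).
  move=> j; have [N HN2] := HN j; exists (maxn N j) => i hi.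
  have hNi : N <= i by apply: leq_trans hi; rewrite leq_maxl.
  have hji : j <= i by apply: leq_trans hi; rewrite leq_maxr.
  have := h'P i j hji (HN2 i hNi) => /Conj_sat /(_ j (leqnn j)) ->.
  by rewrite /t; case: asboolP => H; split.
exists h' => p E E' HE.
pose rho v := if `[< E v = h /\ E' v = h' >] then 0
              else (eps 0 (fun k => q k = (E v, E' v))).+1.
have hL i : ev E i = Lenv (h i) i \o rho.
  apply: funext => v; rewrite /= /rho /Lenv /ev; case: asboolP => [[-> _]|nh] //=.
  have : exists k, q k = (E v, E' v).
    by case: (HE v) => [/qQ //|[e1 e2]]; case: nh.
  by move/(epsP 0) => ->.
have hR i : ev E' i = Renv (h' i) i \o rho.
  apply: funext => v; rewrite /= /rho /Renv /ev; case: asboolP => [[_ ->]|nh] //=.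
  have : exists k, q k = (E v, E' v).
    by case: (HE v) => [/qQ //|[e1 e2]]; case: nh.
  by move/(epsP 0) => ->.
have [p' Hp'] := rename I p rho.
have [j ej] := en_surj p'.
have [N HN3] := cond j; exists N => i hi.
by rewrite hL hR -!Hp' -ej; apply: HN3.
Qed.

End TPsec.

Set Implicit Arguments. Unset Strict Implicit. Unset Printing Implicit Defensive.

Section Seed.
Variables (Sym : Type) (ar : Sym -> nat) (A : Type).
Variable (I : forall s : Sym, ('I_(ar s) -> A) -> Prop).
Variable (en : nat -> formula ar).
Hypothesis en_surj : forall p, exists k, en k = p.
Variables (n : nat) (R : ('I_n -> A) -> Prop).
Hypothesis ndef : ~ definable I R.

Definition setb (s : nat -> bool) (k : nat) (b : bool) : nat -> bool :=
  fun j => if j == k then b else s j.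

Section Dis.
Variable (m : nat).
Variable (Real : (nat -> bool) -> Prop).

Fixpoint Dis (k : nat) (s : nat -> bool) : formula ar :=
  match k with
  | 0 => if `[< Real s >] then Conj en s m else FNot (FEq ar 0 0)
  | k'.+1 => FOr (Dis k' (setb s k' true)) (Dis k' (setb s k' false))
  end.

Lemma Dis_sat (k : nat) : forall (s : nat -> bool) (e : nat -> A),
  sat I e (Dis k s) <->
  exists s', [/\ forall j, k <= j -> s' j = s j, Real s' & sat I e (Conj en s' m)].
Proof.
elim: k => [|k IH] s e /=.
  case: asboolP => H; split.
  - by move=> Hs; exists s.
  - by move=> [s' [H1 _ H3]]; have <- : s' = s by apply: funext => j; apply: H1.
  - by move=> /(_ erefl).
  - move=> [s' [H1 H2 _]]; have E : s' = s by apply: funext => j; apply: H1.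
    by rewrite E in H2.
rewrite !IH; split.
  move=> [] [s' [H1 H2 H3]]; exists s'; split=> // j hj;
    rewrite H1 ?(ltnW hj) // /setb; case: eqP => // ejk; by move: hj; rewrite ejk ltnn.
move=> [s' [H1 H2 H3]].
have Hs' : s' = setb s' k (s' k) by apply: funext => j; rewrite /setb; case: eqP => // ->.
case E: (s' k); [left | right]; exists s'; split=> // j hj; rewrite /setb;
  case: eqP => [->|njk] //; apply: H1; rewrite ltn_neqAle hj andbT eq_sym; apply/eqP => //.
Qed.
End Dis.

Lemma seed_step (m : nat) : exists e12 : (nat -> A) * (nat -> A),
  [/\ R (fun k => e12.1 k), ~ R (fun k => e12.2 k) &
      forall j, j <= m -> (sat I e12.1 (en j) <-> sat I e12.2 (en j))].
Proof.
apply: contrapT => H; apply: ndef.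
pose pat (e : nat -> A) : nat -> bool := fun j => `[< sat I e (en j) >].
pose Real (s : nat -> bool) := exists e : nat -> A, R (fun k : 'I_n => e k) /\ forall j, j <= m -> pat e j = s j.
exists (Dis m Real m.+1 (fun _ => false)) => e.
rewrite Dis_sat; split.
  move=> Re; exists (fun j => if j <= m then pat e j else false); split.
  - by move=> j hj; case: ifP => //; rewrite leqNgt hj.
  - by exists e; split=> // j ->.
  - apply/Conj_sat => j hj; rewrite hj /pat; by case: asboolP.
move=> [s' [_ [e1 [Re1 He1]] Hc]].
apply: contrapT => nRe; apply: H; exists (e1, e); split=> // j hj /=.
move/Conj_sat: Hc => /(_ j hj) Hc.
have := He1 j hj; rewrite /pat Hc; case: asboolP => h3 <-; by split.
Qed.

Lemma seed : exists (a b : nat -> nat -> A),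
  [/\ forall i, R (fun k => a i k), forall i, ~ R (fun k => b i k) &
      forall p, aeq (fun i => sat I (a i) p) (fun i => sat I (b i) p)].
Proof.
have [f Hf] := choice seed_step.
exists (fun i => (f i).1), (fun i => (f i).2); split.
- by move=> i; case: (Hf i).
- by move=> i; case: (Hf i).
move=> p; have [j <-] := en_surj p; exists j => i hi.
by case: (Hf i) => _ _ /(_ j hi).
Qed.

End Seed.

Set Implicit Arguments. Unset Strict Implicit. Unset Printing Implicit Defensive.

Definition Cnt (X : Type) (P : X -> Prop) :=
  exists q : nat -> X, forall y, P y -> exists k, q k = y.

Definition goodord (X : Type) (lt : X -> X -> Prop) :=
  [/\ well_founded lt, (forall x y, x <> y -> lt x y \/ lt y x),
      (forall x y z, lt x y -> lt y z -> lt x z) &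
      forall x, Cnt (fun y => lt y x)].

Lemma pullback (T X : Type) (lt : X -> X -> Prop) (iota : T -> X) (t0 : T) :
  injective iota -> well_founded lt -> (forall x y, x <> y -> lt x y \/ lt y x) ->
  (forall x y z, lt x y -> lt y z -> lt x z) ->
  (forall a, Cnt (fun y => lt y (iota a))) -> goodord (fun a b => lt (iota a) (iota b)).
Proof.
move=> inj wf tot tr cnt; split.
- exact: wf_inverse_image.
- by move=> x y nxy; apply: tot => /inj.
- by move=> x y z; apply: tr.
- move=> b; have [q Hq] := cnt b.
  exists (fun k => eps t0 (fun a => iota a = q k)) => a /Hq [k Hk]; exists k.
  have E : iota (eps t0 (fun a0 => iota a0 = q k)) = q k.
    by apply: (@epsP _ t0 (fun a0 => iota a0 = q k)); exists a.
  by move: E; rewrite Hk => /inj.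
Qed.

Section WO.
Local Notation X := (nat -> bool).

Lemma wo_min (W : rel X) : well_order W ->
  forall P : X -> Prop, (exists x, P x) -> exists z, P z /\ forall x, P x -> W z x.
Proof.
move=> wo P [x Px].
have [|z [[zin lb] _]] := wo [pred y | `[< P y >]]; first by exists x; rewrite inE; apply/asboolP.
exists z; split; first by move: zin; rewrite inE => /asboolP.
by move=> y Py; apply: lb; rewrite inE; apply/asboolP.
Qed.

Lemma wo_antisym (W : rel X) : well_order W -> forall x y, W x y -> W y x -> x = y.
Proof.
move=> wo x y Wxy Wyx.
have refl z : W z z.
  by have [z' [-> H]] := wo_min wo (ex_intro (fun t => t = z) z erefl); apply: H.
have [|z [_ uniq]] := wo [pred t | `[< t = x \/ t = y >]]; first by exists x; rewrite inE; apply/asboolP; left.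
have mx : minimum_of W [pred t | `[< t = x \/ t = y >]] x.
  split; first by rewrite inE; apply/asboolP; left.
  by move=> t; rewrite inE => /asboolP [] ->.
have my : minimum_of W [pred t | `[< t = x \/ t = y >]] y.
  split; first by rewrite inE; apply/asboolP; right.
  by move=> t; rewrite inE => /asboolP [] ->.
by rewrite -(uniq _ mx) -(uniq _ my).
Qed.

Lemma wo_total (W : rel X) : well_order W -> forall x y, W x y \/ W y x.
Proof.
move=> wo x y.
have [z [[]-> H]] := wo_min wo (ex_intro (fun t => t = x \/ t = y) x (or_introl erefl)).
- by left; apply: H; right.
- by right; apply: H; left.
Qed.

Lemma goodord_X (hCH : CH) : exists lt : X -> X -> Prop, goodord lt.
Proof.
have [W wo] := well_ordering_principle X.
pose ltW x y := W x y /\ x <> y.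
have anti := wo_antisym wo.
have wf : well_founded ltW.
  move=> x; apply: contrapT => nAx.
  have [z [nAz Hz]] := wo_min wo (ex_intro (fun t => ~ Acc ltW t) x nAx).
  apply: nAz; constructor => y [Wyz nyz]; apply: contrapT => nAy.
  by apply: nyz; apply: anti => //; apply: Hz.
have tot : forall x y, x <> y -> ltW x y \/ ltW y x.
  move=> x y nxy; case: (wo_total wo x y) => H; [left|right]; split=> // E; exact: nxy.
have tr : forall x y z, ltW x y -> ltW y z -> ltW x z.
  move=> x y z [Wxy nxy] [Wyz nyz]; split.
    have [m [Hm Hmin]] := wo_min wo (ex_intro (fun t => t = x \/ t = y \/ t = z) x (or_introl erefl)).
    case: Hm => [Em|[Em|Em]]; subst m; first by apply: Hmin; right; right.
      by have E := anti _ _ Wxy (Hmin x (or_introl erefl)); rewrite E.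
    by have E := anti _ _ Wyz (Hmin y (or_intror (or_introl erefl))); rewrite -E.
  move=> E; subst z; by apply: nxy; apply: anti.
case: (lem (forall x, Cnt (fun y => ltW y x))) => Hc.
  by exists ltW; split.
have [x Hx] : exists x, ~ Cnt (fun y => ltW y x).
  by apply: contrapT => H; apply: Hc => x; apply: contrapT => H'; apply: H; exists x.
have [x0 [nc0 min0]] := wo_min wo (ex_intro (fun t => ~ Cnt (fun y => ltW y t)) x Hx).
case: (hCH (fun y => ltW y x0)) => [[g Hg]|[h [hS hinj]]].
  by case: nc0; exists g.
exists (fun a b => ltW (h a) (h b)).
apply: (@pullback X X ltW h (fun _ => false) hinj wf tot tr) => z; apply: contrapT => nz.
have [Wh nh] := hS z.
by apply: nh; apply: anti => //; apply: min0.
Qed.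
End WO.

Lemma goodord_F (hCH : CH) (A : Type) (c : A -> nat) (hc : injective c) (a0 : A) :
  exists lt : (nat -> A) -> (nat -> A) -> Prop, goodord lt.
Proof.
have [lt [wf tot tr cnt]] := goodord_X hCH.
pose iota (g : nat -> A) : nat -> bool := fun k =>
  if @unpickle (prod nat nat) k is Some (i, j) then c (g i) == j else false.
have inj : injective iota.
  move=> g g' E; apply: funext => i.
  have := congr1 (fun f => f (pickle (i, c (g i)))) E; rewrite /iota pickleK eqxx.
  by move/esym/eqP/hc.
exists (fun a b => lt (iota a) (iota b)).
by apply: (@pullback _ _ lt iota (fun _ => a0) inj wf tot tr) => a; apply: cnt.
Qed.

Set Implicit Arguments. Unset Strict Implicit. Unset Printing Implicit Defensive.

Section Trans.
Variables (Sym : Type) (ar : Sym -> nat) (A : Type).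
Variable (I : forall s : Sym, ('I_(ar s) -> A) -> Prop).
Variable (en : nat -> formula ar).
Hypothesis en_surj : forall p, exists k, en k = p.
Local Notation F := (nat -> A).
Local Notation TPI := (TP I).

Definition Enum (Q : F -> F -> Prop) := exists q : nat -> F * F,
  (forall k, Q (q k).1 (q k).2) /\ forall a b, Q a b -> exists k, q k = (a, b).

Lemma Enum_add Q a b : Enum Q -> Enum (fun x y => Q x y \/ (x = a /\ y = b)).
Proof.
move=> [q [H1 H2]]; exists (fun k => if k is k'.+1 then q k' else (a, b)); split.
  by case=> [|k] /=; [right | left].
move=> x y [/H2 [k Hk]|[-> ->]]; [by exists k.+1 | by exists 0].
Qed.

Lemma Enum_sym Q : Enum Q -> Enum (fun x y => Q y x).
Proof.
move=> [q [H1 H2]]; exists (fun k => ((q k).2, (q k).1)); split=> // x y /H2 [k Hk].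
by exists k; rewrite Hk.
Qed.

Lemma ext_fw Q : Enum Q -> TPI Q -> forall h, exists h', TPI (fun a b => Q a b \/ (a = h /\ b = h')).
Proof. by move=> [q [H1 H2]] TQ h; apply: (TP_extend en_surj H1 H2 TQ). Qed.

Lemma ext_bw Q : Enum Q -> TPI Q -> forall h', exists h, TPI (fun a b => Q a b \/ (a = h /\ b = h')).
Proof.
move=> EQ TQ h'.
have [h Hh] := ext_fw (Enum_sym EQ) (TP_sym TQ) h'.
exists h; have := TP_sym Hh; apply: TP_sub => a b [H|[-> ->]]; by [left | right].
Qed.

Variable lt : F -> F -> Prop.
Hypotheses (wf : well_founded lt) (tot : forall x y, x <> y -> lt x y \/ lt y x)
  (tr : forall x y z, lt x y -> lt y z -> lt x z) (cnt : forall x, Cnt (fun y => lt y x)).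
Variable Q0 : F -> F -> Prop.
Hypotheses (EQ0 : Enum Q0) (TQ0 : TPI Q0).

Lemma stage_union (B : F -> Prop) (Qs : F -> F -> F -> Prop) :
  (forall y y' a b, lt y y' -> Qs y a b -> Qs y' a b) ->
  (forall y a b, Q0 a b -> Qs y a b) ->
  (forall y, B y -> TPI (Qs y)) ->
  TPI (fun a b => Q0 a b \/ exists y, B y /\ Qs y a b).
Proof.
move=> mono incl TQs; apply: TP_fin => E E' b HE.
have [q [Hq _]] := EQ0.
have : (forall v, v < b -> Q0 (E v) (E' v)) \/
        exists y, B y /\ forall v, v < b -> Qs y (E v) (E' v).
  elim: b => [|b [IH|[y [By Hy]]]]; first by left.
  - case: (HE b) => [Q0b|[z [Bz Qz]]].
      by left=> v; rewrite ltnS leq_eqVlt => /orP[/eqP ->|/IH].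
    right; exists z; split=> // v; rewrite ltnS leq_eqVlt => /orP[/eqP ->|/IH] //.
    exact: incl.
  - case: (HE b) => [Q0b|[z [Bz Qz]]].
      right; exists y; split=> // v; rewrite ltnS leq_eqVlt => /orP[/eqP ->|/Hy] //.
      exact: incl.
    case: (lem (y = z)) => [Eyz|nyz].
      subst z; right; exists y; split=> // v; rewrite ltnS leq_eqVlt => /orP[/eqP ->|/Hy] //.
    case: (tot nyz) => lyz.
      right; exists z; split=> // v; rewrite ltnS leq_eqVlt => /orP[/eqP ->|/Hy] //.
      exact: mono.
    right; exists y; split=> // v; rewrite ltnS leq_eqVlt => /orP[/eqP ->|/Hy] //.
    exact: (mono z).
case=> [H|[y [By Hy]]].
  by exists Q0; split=> //; exists (q 0).1, (q 0).2.
exists (Qs y); split; [exact: TQs | exact: Hy | by exists (q 0).1, (q 0).2; apply: incl].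
Qed.

Definition Qof (x : F) (rec : forall y, lt y x -> F * F) : F -> F -> Prop :=
  fun a b => Q0 a b \/ exists y (H : lt y x),
    (a = y /\ b = (rec y H).1) \/ (a = (rec y H).2 /\ b = y).

Definition step (x : F) (rec : forall y, lt y x -> F * F) : F * F :=
  let fw := eps x (fun h' => TPI (fun a b => Qof rec a b \/ (a = x /\ b = h'))) in
  (fw, eps x (fun h => TPI (fun a b => (Qof rec a b \/ (a = x /\ b = fw)) \/ (a = h /\ b = x)))).

Definition G := Fix wf (fun _ => (F * F)%type) step.
Definition Fw x := (G x).1.
Definition Bw x := (G x).2.
Definition Qlt x a b := Q0 a b \/ exists y, lt y x /\ ((a = y /\ b = Fw y) \/ (a = Bw y /\ b = y)).
Definition Qle x a b := Qlt x a b \/ (a = x /\ b = Fw x) \/ (a = Bw x /\ b = x).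

Lemma Qof_eq x : Qof (fun y (_ : lt y x) => G y) = Qlt x.
Proof.
apply: funext => a; apply: funext => b; apply: propext; rewrite /Qof /Qlt /Fw /Bw.
split=> -[H|H]; [by left| |by left|]; right.
  by case: H => y [H HH]; exists y.
by case: H => y [H HH]; exists y, H.
Qed.

Lemma G_eq x : G x = step (fun y (_ : lt y x) => G y).
Proof.
rewrite /G Fix_eq // => z f g Hfg; rewrite /step.
have -> : Qof f = Qof g.
  apply: funext => a; apply: funext => b; apply: propext; rewrite /Qof.
  by split=> -[H|[y [H HH]]]; [left| right; exists y, H; rewrite -Hfg |left |right; exists y, H; rewrite Hfg].
by [].
Qed.

Lemma Fw_eq x : Fw x = eps x (fun h' => TPI (fun a b => Qlt x a b \/ (a = x /\ b = h'))).
Proof. by rewrite /Fw G_eq /step /= Qof_eq. Qed.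

Lemma Bw_eq x : Bw x = eps x (fun h => TPI (fun a b => (Qlt x a b \/ (a = x /\ b = Fw x)) \/ (a = h /\ b = x))).
Proof. by rewrite /Bw G_eq /step /= Qof_eq -Fw_eq. Qed.

Lemma Qle_mono y y' a b : lt y y' -> Qle y a b -> Qle y' a b.
Proof.
move=> lyy' [[H|[z [lz H]]]|H]; left; [by left| |]; right.
  by exists z; split=> //; apply: tr lyy'.
by exists y; split.
Qed.

Lemma Enum_Qlt x : Enum (Qlt x).
Proof.
have [r Hr] := cnt x; have [q0 [Hq1 Hq2]] := EQ0.
pose cand j (t : nat) := if t == 0 then q0 j else if t == 1 then (r j, Fw (r j)) else (Bw (r j), r j).
exists (fun k => if @unpickle (prod nat nat) k is Some (j, t) then
          (if `[< Qlt x (cand j t).1 (cand j t).2 >] then cand j t else q0 0) else q0 0).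
split.
  move=> k; case: (unpickle k) => [[j t]|]; last by left.
  by case: asboolP => // _; left.
move=> a b [/Hq2 [j Hj]|[y [ly [[-> ->]|[-> ->]]]]].
- exists (pickle (j, 0)); rewrite pickleK /cand /= Hj.
  by case: asboolP => // -[]; left; rewrite -Hj.
- have [j Hj] := Hr y ly; exists (pickle (j, 1)); rewrite pickleK /cand /= Hj.
  by case: asboolP => // -[]; right; exists y; split=> //; left.
- have [j Hj] := Hr y ly; exists (pickle (j, 2)); rewrite pickleK /cand /= Hj.
  by case: asboolP => // -[]; right; exists y; split=> //; right.
Qed.

Lemma TP_Qle x : TPI (Qle x).
Proof.
elim/(well_founded_ind wf): x => x IH.
have TQlt : TPI (Qlt x).
  have := stage_union (B := fun y => lt y x) (Qs := Qle) Qle_mono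
    (fun y a b H => or_introl (or_introl H)) IH.
  apply: TP_sub => a b [H|[y [ly [[-> ->]|[-> ->]]]]]; first by left.
    by right; exists y; split=> //; right; left.
  by right; exists y; split=> //; right; right.
have TF : TPI (fun a b => Qlt x a b \/ (a = x /\ b = Fw x)).
  have := @epsP _ x (fun h' => TPI (fun a b => Qlt x a b \/ (a = x /\ b = h')))
    (ext_fw (Enum_Qlt x) TQlt x).
  by rewrite -Fw_eq.
have TB : TPI (fun a b => (Qlt x a b \/ (a = x /\ b = Fw x)) \/ (a = Bw x /\ b = x)).
  have := @epsP _ x (fun h => TPI (fun a b => (Qlt x a b \/ (a = x /\ b = Fw x)) \/ (a = h /\ b = x)))
    (ext_bw (Enum_add _ _ (Enum_Qlt x)) TF x).
  by rewrite -Bw_eq.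
move: TB; apply: TP_sub => a b [H|[H|H]]; by [left; left | left; right | right].
Qed.

Lemma transfinite : TPI (fun a b => Q0 a b \/ b = Fw a \/ a = Bw b).
Proof.
have := stage_union (B := fun _ => True) (Qs := Qle) Qle_mono
    (fun y a b H => or_introl (or_introl H)) (fun y _ => @TP_Qle y).
apply: TP_sub => a b [H|[->|->]]; first by left.
  by right; exists a; split=> //; right; left.
by right; exists b; split=> //; right; right.
Qed.

End Trans.

Set Implicit Arguments. Unset Strict Implicit. Unset Printing Implicit Defensive.

Lemma aeq_and (P1 Q1 P2 Q2 : nat -> Prop) (op : Prop -> Prop -> Prop) :
  (forall a b c d, (a <-> b) -> (c <-> d) -> (op a c <-> op b d)) ->
  aeq P1 Q1 -> aeq P2 Q2 -> aeq (fun i => op (P1 i) (P2 i)) (fun i => op (Q1 i) (Q2 i)).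
Proof.
move=> Hop [N1 H1] [N2 H2]; exists (maxn N1 N2) => i hi; apply: Hop.
  by apply: H1; apply: leq_trans hi; rewrite leq_maxl.
by apply: H2; apply: leq_trans hi; rewrite leq_maxr.
Qed.

Section Dir1.
Variables (Sym : Type) (ar : Sym -> nat) (A : Type).
Variable (I : forall s : Sym, ('I_(ar s) -> A) -> Prop).
Local Notation F := (nat -> A).
Variable phi : F -> F.
Hypotheses (bij : bijective phi) (peq : almost_preserves phi (@eq_rel A))
  (pI : forall s, almost_preserves phi (@I s)).

Lemma ev_upd (E : nat -> F) x h i : ev (upd E x h) i = upd (ev E i) x (h i).
Proof. by apply: funext => v; rewrite /ev /upd; case: eqP. Qed.

Lemma phi_upd (E : nat -> F) x h : phi \o upd E x h = upd (phi \o E) x (phi h).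
Proof. by apply: funext => v; rewrite /= /upd; case: eqP. Qed.

Lemma pres_all (p : formula ar) : forall E : nat -> F,
  aeq (fun i => sat I (ev E i) p) (fun i => sat I (ev (phi \o E) i) p).
Proof.
have [g gK Kg] := bij.
elim: p => [x y|s args|p IH|p IHp q IHq|p IHp q IHq|p IHp q IHq|x p IH|x p IH] E /=.
- have [N HN] := peq (fun k : 'I_2 => if k == ord0 then E x else E y).
  by exists N => i /HN.
- have [N HN] := pI (fun k => E (args k)).
  by exists N => i /HN.
- have [N HN] := IH E; exists N => i /HN ->; by [].
- by apply: (@aeq_and _ _ _ _ and _ (IHp E) (IHq E)) => a b c d -> ->.
- by apply: (@aeq_and _ _ _ _ or _ (IHp E) (IHq E)) => a b c d -> ->.
- by apply: (@aeq_and _ _ _ _ (fun a b => a -> b) _ (IHp E) (IHq E)) => a b c d -> ->.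
- pose h1 : F := fun i => eps (E 0 i) (fun a => sat I (upd (ev E i) x a) p).
  pose h2 : F := fun i => eps (E 0 i) (fun a => sat I (upd (ev (phi \o E) i) x a) p).
  have [N1 H1] := IH (upd E x h1).
  have [N2 H2] := IH (upd E x (g h2)).
  exists (maxn N1 N2) => i hi; split.
  + move=> /(epsP (E 0 i)) H; exists (phi h1 i).
    have := H1 i (leq_trans (leq_maxl _ _) hi).
    by rewrite ev_upd phi_upd ev_upd => /iffLR; apply.
  + move=> /(epsP (E 0 i)) H; exists (g h2 i).
    have := H2 i (leq_trans (leq_maxr _ _) hi).
    by rewrite ev_upd phi_upd ev_upd Kg => /iffRL; apply.
- pose h1 : F := fun i => eps (E 0 i) (fun a => ~ sat I (upd (ev E i) x a) p).
  pose h2 : F := fun i => eps (E 0 i) (fun a => ~ sat I (upd (ev (phi \o E) i) x a) p).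
  have [N1 H1] := IH (upd E x h1).
  have [N2 H2] := IH (upd E x (g h2)).
  exists (maxn N1 N2) => i hi; split.
  + move=> H a; apply: contrapT => na.
    have /(epsP (E 0 i)) := ex_intro (fun a => ~ sat I (upd (ev (phi \o E) i) x a) p) a na.
    apply; have := H2 i (leq_trans (leq_maxr _ _) hi).
    by rewrite ev_upd phi_upd ev_upd Kg => /iffLR; apply.
  + move=> H a; apply: contrapT => na.
    have /(epsP (E 0 i)) := ex_intro (fun a => ~ sat I (upd (ev E i) x a) p) a na.
    apply; have := H1 i (leq_trans (leq_maxl _ _) hi).
    by rewrite ev_upd phi_upd ev_upd => /iffRL; apply.
Qed.

Lemma def_pres (n : nat) (R : ('I_n -> A) -> Prop) : definable I R -> almost_preserves phi R.
Proof.
move=> [S HS] f.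
case: n R f HS => [|n] R f HS.
  exists 0 => i _.
  have -> // : (fun k : 'I_0 => phi (f k) i) = (fun k => f k i).
  by apply: funext => -[].
pose E : nat -> F := fun v => f (inord v).
have [N HN] := pres_all S E.
exists N => i /HN.
have -> : (fun k => f k i) = (fun k : 'I_n.+1 => ev E i k).
  by apply: funext => k; rewrite /ev /E inord_val.
have -> : (fun k => phi (f k) i) = (fun k : 'I_n.+1 => ev (phi \o E) i k).
  by apply: funext => k; rewrite /ev /E /= inord_val.
by rewrite !HS.
Qed.
End Dir1.

Set Implicit Arguments. Unset Strict Implicit. Unset Printing Implicit Defensive.

Section Final.
Variables (Sym : Type) (ar : Sym -> nat) (A : Type).
Variable (I : forall s : Sym, ('I_(ar s) -> A) -> Prop).
Local Notation F := (nat -> A).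
Variables (a b : nat -> nat -> A).
Definition fk k : F := fun i => a i k.
Definition gk k : F := fun i => b i k.
Definition Q0s (x y : F) := exists k, x = fk k /\ y = gk k.
Variables (Fw Bw : F -> F).
Hypothesis TT : TP I (fun x y => Q0s x y \/ y = Fw x \/ x = Bw y).

Definition almeq (f g : F) := exists N, forall i, N <= i -> f i = g i.

Lemma almeq_refl f : almeq f f. Proof. by exists 0. Qed.
Lemma almeq_sym f g : almeq f g -> almeq g f.
Proof. by move=> [N H]; exists N => i /H. Qed.
Lemma almeq_trans f g h : almeq f g -> almeq g h -> almeq f h.
Proof.
move=> [N1 H1] [N2 H2]; exists (maxn N1 N2) => i hi.
rewrite H1 ?H2 //; apply: leq_trans hi; by rewrite ?leq_maxl ?leq_maxr.
Qed.

Lemma T1 (E : nat -> F) p : aeq (fun i => sat I (ev E i) p) (fun i => sat I (ev (Fw \o E) i) p).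
Proof. by apply: TT => v; right; left. Qed.

Lemma T2 x y : almeq (Fw x) (Fw y) <-> almeq x y.
Proof.
have [N HN] := T1 (fun v => if v == 0 then x else y) (FEq ar 0 1).
split=> -[M HM]; exists (maxn N M) => i hi.
  apply/(HN i (leq_trans (leq_maxl _ _) hi)); rewrite /ev /=.
  exact: HM (leq_trans (leq_maxr _ _) hi).
apply/(HN i (leq_trans (leq_maxl _ _) hi)); rewrite /ev /=.
exact: HM (leq_trans (leq_maxr _ _) hi).
Qed.

Lemma T3 m : almeq (Fw (Bw m)) m.
Proof.
have [N HN] := TT (FEq ar 0 1) (E := fun _ => Bw m)
   (E' := fun v => if v == 0 then Fw (Bw m) else m)
   (fun v => ltac:(rewrite /=; case: (v == 0); [right; left | right; right]; by [])).
by exists N => i /HN; rewrite /ev /= => -[->].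
Qed.

Lemma T4 k : almeq (Fw (fk k)) (gk k).
Proof.
have [N HN] := TT (FEq ar 0 1) (E := fun _ => fk k)
   (E' := fun v => if v == 0 then Fw (fk k) else gk k)
   (fun v => ltac:(rewrite /=; case: (v == 0); [right; left | left; exists k]; by [])).
by exists N => i /HN; rewrite /ev /= => -[->].
Qed.

Lemma eps_indep (T : Type) (d d' : T) (P : T -> Prop) : (exists x, P x) -> eps d P = eps d' P.
Proof. by rewrite /eps; case: pselect. Qed.

Definition rep (f : F) : F := eps f (fun g => almeq g f).
Lemma rep_almeq f : almeq (rep f) f.
Proof. by apply: (@epsP _ f (fun g => almeq g f)); exists f; apply: almeq_refl. Qed.
Lemma rep_eq f f' : almeq f f' -> rep f = rep f'.
Proof.
move=> H; rewrite /rep.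
have -> : (fun g => almeq g f) = (fun g => almeq g f').
  apply: funext => g; apply: propext; split=> Hg; first exact: almeq_trans Hg H.
  exact: almeq_trans Hg (almeq_sym H).
by apply: eps_indep; exists f'; apply: almeq_refl.
Qed.

Definition sw (x y z : A) : A :=
  if `[< z = x >] then y else if `[< z = y >] then x else z.

Lemma swK x y z : sw x y (sw x y z) = z.
Proof.
rewrite /sw; case: (asboolP (z = x)) => [->|nzx].
  case: (asboolP (y = x)) => [->//|nyx]; by rewrite asboolT.
case: (asboolP (z = y)) => [->|nzy]; first by rewrite asboolT.
by rewrite asboolF // asboolF.
Qed.

Definition swap (f g k : F) : F := fun i => sw (f i) (g i) (k i).

Lemma swapK f g k : swap f g (swap f g k) = k.
Proof. by apply: funext => i; rewrite /swap swK. Qed.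

Lemma swap_l f g k : almeq k f -> almeq (swap f g k) g.
Proof. by move=> [N H]; exists N => i /H; rewrite /swap /sw => ->; rewrite asboolT. Qed.

Lemma swap_r f g m : almeq m g -> almeq (swap f g m) f.
Proof.
move=> [N H]; exists N => i /H; rewrite /swap /sw => ->.
by case: (asboolP (g i = f i)) => [//|_]; rewrite asboolT.
Qed.

Definition phi (k : F) : F := swap (rep k) (Fw (rep k)) k.

Lemma phi_almeq k : almeq (phi k) (Fw k).
Proof.
apply: (almeq_trans (swap_l _ (almeq_sym (rep_almeq k)))).
by apply/T2; apply: rep_almeq.
Qed.

Lemma phi_inj : injective phi.
Proof.
move=> k k' E.
have h1 : almeq (Fw (rep k)) (Fw (rep k')).
  apply: almeq_trans (almeq_sym (swap_l _ (almeq_sym (rep_almeq k)))) _.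
  rewrite -/(phi k) E; exact: swap_l _ (almeq_sym (rep_almeq k')).
move/T2: h1 => h1.
have h2 : almeq k k'.
  exact: almeq_trans (almeq_sym (rep_almeq k)) (almeq_trans h1 (rep_almeq k')).
have h3 := rep_eq h2.
have := congr1 (swap (rep k) (Fw (rep k))) E.
by rewrite {1}/phi swapK /phi -h3 swapK.
Qed.

Lemma phi_surj m : exists k, phi k = m.
Proof.
pose r := rep (Bw m).
have hr : almeq r (Bw m) by apply: rep_almeq.
have hFr : almeq (Fw r) m by apply: almeq_trans (T3 m); apply/T2.
exists (swap r (Fw r) m).
have hk : almeq (swap r (Fw r) m) r by apply: swap_r; apply: almeq_sym.
have e : rep (swap r (Fw r) m) = r by rewrite (rep_eq (almeq_trans hk hr)).
by rewrite /phi e swapK.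
Qed.

Lemma phi_bij : bijective phi.
Proof.
exists (fun m => eps m (fun k => phi k = m)) => [k|m].
  apply: phi_inj; apply: (@epsP _ (phi k) (fun k' => phi k' = phi k)); by exists k.
by apply: (@epsP _ m (fun k => phi k = m)); apply: phi_surj.
Qed.

Lemma unif_fin (r : nat) (Pk : 'I_r -> nat -> Prop) :
  (forall k, exists N, forall i, N <= i -> Pk k i) ->
  exists N, forall i, N <= i -> forall k, Pk k i.
Proof.
move=> H; have [Nf HN] := choice H.
exists (\max_k Nf k) => i hi k; apply: HN; exact: leq_trans (leq_bigmax k) hi.
Qed.

Lemma AP (r : nat) (P : ('I_r -> A) -> Prop) (p : formula ar) :
  (forall e : nat -> A, P (fun k => e k) <-> sat I e p) -> almost_preserves phi P.
Proof.
move=> HP f; case: r P HP f => [|r] P HP f.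
  exists 0 => i _.
  have -> // : (fun k : 'I_0 => phi (f k) i) = (fun k => f k i).
  by apply: funext => -[].
pose E : nat -> F := fun v => f (inord v).
have [N1 H1] := T1 E p.
have [N2 H2] := unif_fin (Pk := fun k i => phi (f k) i = Fw (f k) i)
                  (fun k => phi_almeq (f k)).
exists (maxn N1 N2) => i hi.
have -> : (fun k => f k i) = (fun k : 'I_r.+1 => ev E i k).
  by apply: funext => k; rewrite /ev /E inord_val.
have -> : (fun k => phi (f k) i) = (fun k : 'I_r.+1 => ev (Fw \o E) i k).
  apply: funext => k; rewrite /ev /E /= inord_val.
  exact: H2 (leq_trans (leq_maxr _ _) hi) k.
by rewrite !HP; apply: H1; apply: leq_trans hi; rewrite leq_maxl.
Qed.

Lemma phi_eq : almost_preserves phi (@eq_rel A).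
Proof. by apply: (AP (p := FEq ar 0 1)). Qed.

Lemma phi_I s : almost_preserves phi (@I s).
Proof. by apply: (AP (p := FRel (fun k : 'I_(ar s) => nat_of_ord k))). Qed.

Lemma phi_notR (n : nat) (R : ('I_n -> A) -> Prop) :
  (forall i, R (fun k => a i k)) -> (forall i, ~ R (fun k => b i k)) ->
  ~ almost_preserves phi R.
Proof.
move=> Ra nRb /(_ (fun k : 'I_n => fk k)) [N HN].
have [N2 H2] := unif_fin (Pk := fun (k : 'I_n) i => phi (fk k) i = gk k i)
   (fun k => almeq_trans (phi_almeq (fk k)) (T4 k)).
have hi : N <= maxn N N2 by rewrite leq_maxl.
apply: (nRb (maxn N N2)); have := (HN _ hi).1 (Ra _).
have -> // : (fun k : 'I_n => phi (fk k) (maxn N N2)) = (fun k => b (maxn N N2) k).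
by apply: funext => k; apply: H2; rewrite leq_maxr.
Qed.

End Final.

Unset Implicit Arguments.

Theorem theorem1 (hCH : CH)
    (Sym : Type) (ar : Sym -> nat) (A : Type)
    (hSym : countable_type Sym) (hA : countable_type A)
    (I : forall s : Sym, ('I_(ar s) -> A) -> Prop)
    (n : nat) (R : ('I_n -> A) -> Prop) :
  definable I R <->
  (forall phi : (nat -> A) -> (nat -> A),
      bijective phi ->
      almost_preserves phi (@eq_rel A) ->
      (forall s : Sym, almost_preserves phi (I s)) ->
      almost_preserves phi R).
Proof.
split.
  by move=> Hdef phi bij peq pI; apply: (def_pres bij peq pI).
move=> H; apply: contrapT => ndef.
have [c hc] := hA; have [cS hcS] := hSym.
have en_surj := fenum_surj (ar := ar) hcS.
have [a [b [Ra nRb Hab]]] := seed (I := I) en_surj ndef.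
have [lt [wf tot tr cnt]] := goodord_F hCH hc (a 0 0).
have EQ0 : Enum (Q0s a b).
  exists (fun k => (fk a k, gk b k)); split; first by move=> k; exists k.
  by move=> x y [k [-> ->]]; exists k.
have TQ0 : TP I (Q0s a b).
  move=> p E E' HE.
  pose rho v := eps 0 (fun k => E v = fk a k /\ E' v = gk b k).
  have Hrho v : E v = fk a (rho v) /\ E' v = gk b (rho v).
    by apply: (@epsP _ 0 (fun k => E v = fk a k /\ E' v = gk b k)); apply: HE.
  have [p' Hp'] := rename I p rho.
  have [N HN] := Hab p'; exists N => i hi.
  have -> : ev E i = a i \o rho.
    by apply: funext => v; rewrite /ev /= (Hrho v).1.
  have -> : ev E' i = b i \o rho.
    by apply: funext => v; rewrite /ev /= (Hrho v).2.
  by rewrite -!Hp'; apply: HN.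
have TT := transfinite en_surj (wf := wf) tot tr cnt EQ0 TQ0.
have NR := phi_notR TT Ra nRb. apply: NR.
apply: H; [exact: phi_bij TT | exact: phi_eq TT | move=> s]. exact: (@phi_I _ _ _ _ _ _ _ _ TT s).
Qed.
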